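(* Let $s\ge 2$, $t\ge 2$ and $n=s+t-1$. The graph $K^{s,t}_{n}$ is determined by its $D$-spectrum: every connected graph $D$-cospectral to $K^{s,t}_{n}$ is isomorphic to $K^{s,t}_{n}$.
   Context: All graphs are simple, undirected and connected. For a connected graph $G$, the distance matrix $D(G)$ has as $(i,j)$-entry the distance between the $i$-th and $j$-th vertices; its eigenvalues form the $D$-spectrum of $G$. Two graphs are $D$-cospectral if they have the same $D$-spectrum; $G$ is determined by its $D$-spectrum if every graph $D$-cospectral to $G$ is isomorphic to $G$. $K^{s,t}_{n}$ denotes the graph obtained from disjoint copies of $K_s$ and $K_t$ by identifying a vertex of $K_s$ with a vertex of $K_t$. *)

(* Defs.v *)
From mathcomp Require Import all_boot all_order fingroup perm all_algebra.
Set Implicit Arguments. Unset Strict Implicit. Unset Printing Implicit Defensive.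
Import GRing.Theory Num.Theory.

Definition simple_graph (T : finType) (e : rel T) : Prop :=
  symmetric e /\ irreflexive e.

Definition connected_graph (T : finType) (e : rel T) : Prop :=
  forall u v : T, connect e u v.

Fixpoint ball (T : finType) (e : rel T) (u : T) (k : nat) : {set T} :=
  match k with
  | 0 => [set u]
  | k'.+1 => ball e u k' :|: [set y | [exists x in ball e u k', e x y]]
  end.

(* Graph distance: least k such that v is within k steps of u
   (for connected graphs this is < #|T|). *)
Definition dist (T : finType) (e : rel T) (u v : T) : nat :=
  find (fun k => v \in ball e u k) (iota 0 #|T|).

Definition distmx (n : nat) (e : rel 'I_n) : 'M[int]_n :=
  \matrix_(i, j) Posz (dist e i j).

Definition D_cospectral (n : nat) (e1 e2 : rel 'I_n) : Prop :=
  char_poly (distmx e1) = char_poly (distmx e2).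

Definition graph_iso (n : nat) (e1 e2 : rel 'I_n) : Prop :=
  exists f : {perm 'I_n}, forall x y, e1 x y = e2 (f x) (f y).

(* K^{s,t}_n, n = s+t-1: vertices 0..s-1 form K_s, vertices 0 and s..n-1
   form K_t; vertex 0 is the identified vertex. *)
Definition Kst (s t : nat) : rel 'I_(s + t - 1) :=
  fun i j => (i != j) &&
    (((i < s) && (j < s))%N ||
     (((val i == 0) || (s <= i)) && ((val j == 0) || (s <= j)))%N).
Arguments Kst s t : clear implicits.

(* Main.v *)
Require Import Defs.
From mathcomp Require Import all_boot all_order fingroup perm all_algebra.
From mathcomp Require Import all_field spectral sesquilinear ring zify.
Set Implicit Arguments. Unset Strict Implicit. Unset Printing Implicit Defensive.
Import GRing.Theory Num.Theory Order.TTheory.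

Section Dist.
Variables (T : finType) (e : rel T).

Lemma ball_succ u k z :
  (z \in ball e u k.+1) = (z \in ball e u k) || [exists x in ball e u k, e x z].
Proof. by rewrite /= inE inE. Qed.

Lemma ballS u k : ball e u k \subset ball e u k.+1.
Proof. by rewrite /= subsetUl. Qed.

Lemma ball_mono u k m : (k <= m)%N -> ball e u k \subset ball e u m.
Proof.
move=> /subnK <-; elim: (m - k)%N => [|d IH] //.
by rewrite addSn (subset_trans IH) // ballS.
Qed.

Lemma ball_step u k y z : y \in ball e u k -> e y z -> z \in ball e u k.+1.
Proof. by move=> yb eyz; rewrite ball_succ; apply/orP; right; apply/existsP; exists y; rewrite yb. Qed.

Lemma ball0 u v : (v \in ball e u 0) = (v == u).
Proof. by rewrite /= inE. Qed.

Lemma ball_trans u v w i j :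
  v \in ball e u i -> w \in ball e v j -> w \in ball e u (i + j).
Proof.
move=> vb; elim: j w => [|j IH] w.
  by rewrite ball0 addn0 => /eqP ->.
rewrite ball_succ addnS => /orP[/IH wb|/existsP[x /andP[xb exw]]].
  exact: (subsetP (ballS _ _)).
exact: ball_step (IH _ xb) exw.
Qed.

Hypothesis esym : symmetric e.

Lemma ball1 u v : e u v -> v \in ball e u 1.
Proof. by move=> euv; apply: (ball_step (y := u)); rewrite ?ball0. Qed.

Lemma ball_sym u v k : v \in ball e u k -> u \in ball e v k.
Proof.
elim: k v => [|k IH] v; first by rewrite !ball0 eq_sym.
rewrite ball_succ => /orP[/IH ub|/existsP[y /andP[yb eyv]]].
  exact: (subsetP (ballS _ _)).
have evy : e v y by rewrite esym.
by have := ball_trans (ball1 evy) (IH _ yb); rewrite add1n.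
Qed.

Hypothesis econn : forall u v, connect e u v.

Lemma path_ball u p : path e u p -> last u p \in ball e u (size p).
Proof.
elim: p u => [|x p IH] u /=; first by rewrite ball0.
move=> /andP[eux pp].
have := ball_trans (ball1 eux) (IH _ pp); by rewrite add1n.
Qed.

Lemma conn_ball u v : v \in ball e u #|T|.-1.
Proof.
have /connectP[p pp ->] := econn u v.
case/shortenP: pp => p' pp' up' _.
apply: (subsetP (ball_mono _ _)) (path_ball pp').
have := card_uniqP up'; rewrite /= => H.
have := max_card (mem (u :: p')); rewrite H /=.
by case: #|T| => // m; rewrite ltnS.
Qed.

Lemma dist_le u v k : (dist e u v <= k)%N = (v \in ball e u k).
Proof.
rewrite /dist; set P := fun k => v \in ball e u k.
have N0 : (0 < #|T|)%N by apply/card_gt0P; exists u.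
have hasP : has P (iota 0 #|T|).
  apply/hasP; exists #|T|.-1; last exact: conn_ball.
  by rewrite mem_iota add0n prednK // leqnn andbT.
have lt := hasP; rewrite has_find size_iota in lt.
have Pd : P (find P (iota 0 #|T|)).
  by have := nth_find 0 hasP; rewrite nth_iota.
apply/idP/idP => [le|Pk].
  exact: (subsetP (ball_mono _ le)) Pd.
rewrite leqNgt; apply/negP => lt'.
have := before_find 0 lt'; rewrite nth_iota ?(ltn_trans lt') // add0n.
by rewrite /P Pk.
Qed.

Lemma dist0 u v : (dist e u v == 0%N) = (u == v).
Proof. by rewrite -leqn0 dist_le ball0 eq_sym. Qed.

Lemma dist_refl u : dist e u u = 0%N.
Proof. by apply/eqP; rewrite dist0. Qed.

Lemma dist_sym u v : dist e u v = dist e v u.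
Proof.
apply/eqP; rewrite eqn_leq !dist_le.
by apply/andP; split; apply: ball_sym; rewrite -dist_le.
Qed.

Lemma dist_tri u v w : (dist e u w <= dist e u v + dist e v w)%N.
Proof.
by rewrite dist_le; apply: (@ball_trans _ v); rewrite -dist_le.
Qed.

Lemma dist1 u v : (u != v) -> (dist e u v == 1%N) = e u v.
Proof.
move=> neq; apply/idP/idP => [|euv].
  move=> /eqP d1; have : v \in ball e u 1 by rewrite -dist_le d1.
  rewrite ball_succ ball0 eq_sym (negPf neq) /= => /existsP[x /andP[]].
  by rewrite ball0 => /eqP ->.
rewrite eqn_leq dist_le ball1 //= lt0n dist0 //.
Qed.

Lemma dist_pred u v k : dist e u v = k.+1 -> exists y, dist e u y = k /\ e y v.
Proof.
move=> dk; have : v \in ball e u k.+1 by rewrite -dist_le dk.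
rewrite ball_succ -dist_le dk ltnn /= => /existsP[y /andP[yb eyv]].
exists y; split => //; apply/eqP; rewrite eqn_leq dist_le yb /=.
rewrite leqNgt; apply/negP => lt.
have : (dist e u v <= k)%N.
  case: k dk lt yb => // k dk lt yb.
  by rewrite dist_le; apply: ball_step eyv; rewrite -dist_le -ltnS.
by rewrite dk ltnn.
Qed.

Lemma dist_edge u v w : e v w -> (dist e u w <= (dist e u v).+1)%N.
Proof.
move=> evw; apply: leq_trans (dist_tri u v w) _.
rewrite -addn1 leq_add2l dist_le; exact: ball1.
Qed.

End Dist.

Local Open Scope ring_scope.

Lemma rank_mxsub (F : fieldType) m n m' n' (f : 'I_m' -> 'I_m) (g : 'I_n' -> 'I_n)
  (A : 'M[F]_(m, n)) : (\rank (mxsub f g A) <= \rank A)%N.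
Proof.
have -> : mxsub f g A = rowsub f 1%:M *m colsub g A by rewrite -mxsub_mul mul1mx.
apply: leq_trans (mxrankM_maxr _ _) _.
have -> : colsub g A = A *m colsub g 1%:M by rewrite mulmx_colsub mulmx1.
exact: mxrankM_maxl.
Qed.

Lemma rank_diag (F : fieldType) n (d : 'rV[F]_n) :
  \rank (diag_mx d) = #|[set i | d 0 i != 0]|.
Proof.
set S := [set i | d 0 i != 0].
pose f := fun p : 'I_#|S| => enum_val p.
apply/eqP; rewrite eqn_leq; apply/andP; split.
  have -> : diag_mx d = colsub f (diag_mx d) *m rowsub f 1%:M.
    apply/matrixP => i j; rewrite !mxE.
    under eq_bigr do rewrite !mxE.
    rewrite -(big_enum_val (fun k => (d 0 i *+ (i == k)) * (k == j)%:R)).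
    have [Hi|Hi] := boolP (i \in S).
      rewrite (bigD1 i) //= eqxx big1 ?addr0.
        by rewrite mulr1n mulr_natr.
      by move=> k /andP[_ /negPf]; rewrite eq_sym => ->; rewrite mulr0n mul0r.
    have d0 : d 0 i = 0 by move: Hi; rewrite inE negbK => /eqP.
    rewrite d0 mul0rn big1 // => k _; by rewrite mul0rn mul0r.
  apply: leq_trans (mxrankM_maxr _ _) _; exact: rank_leq_row.
have -> : #|S| = \rank (mxsub f f (diag_mx d)).
  apply/esym/mxrank_unit.
  have -> : mxsub f f (diag_mx d) = diag_mx (\row_p d 0 (f p)).
    apply/matrixP => p q; rewrite !mxE (inj_eq enum_val_inj).
    by case: eqVneq => // ->.
  rewrite unitmxE det_diag unitfE; apply/prodf_neq0 => p _.
  rewrite mxE; have := enum_valP p; by rewrite inE.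
exact: rank_mxsub.
Qed.

Section LinAlg.
Variable n : nat.

Definition toC (M : 'M[int]_n) : 'M[algC]_n := map_mx (intr : int -> algC) M.

Lemma toC_normal (M : 'M[int]_n) : M^T = M -> toC M \is normalmx.
Proof.
move=> sM; apply: symmetric_normalmx.
  apply/is_hermitianmxP; rewrite expr0 scale1r map_mx_id //.
  by rewrite /toC map_trmx sM.
by apply/mxOverP => i j; rewrite mxE realz.
Qed.

Definition spP (M : 'M[int]_n) := spectralmx (toC M).
Definition spD (M : 'M[int]_n) := spectral_diag (toC M).

Lemma spE (M : 'M[int]_n) : M^T = M ->
  toC M = invmx (spP M) *m diag_mx (spD M) *m spP M.
Proof. by move=> sM; apply/orthomx_spectralP/toC_normal. Qed.

Lemma spU (M : 'M[int]_n) : spP M \in unitmx.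
Proof. exact: spectral_unit. Qed.

Lemma char_poly_conj (P A : 'M[algC]_n) : P \in unitmx ->
  char_poly (invmx P *m A *m P) = char_poly A.
Proof.
move=> Pu; rewrite /char_poly /char_poly_mx.
have -> : 'X%:M - map_mx polyC (invmx P *m A *m P) =
   map_mx polyC (invmx P) *m ('X%:M - map_mx polyC A) *m map_mx polyC P.
  rewrite mulmxBr mulmxBl mul_mx_scalar -scalemxAl -!map_mxM mulVmx //.
  by rewrite map_mx1 scalemx1.
rewrite !det_mulmx mulrC mulrA -det_mulmx -map_mxM mulmxV //.
by rewrite map_mx1 det1 mul1r.
Qed.

Lemma char_sp (M : 'M[int]_n) : M^T = M ->
  map_poly intr (char_poly M) =
  \prod_(i < n) ('X - ((spD M) 0 i)%:P).
Proof.
move=> sM; rewrite map_char_poly -/(toC M) spE // char_poly_conj ?spU //.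
rewrite char_poly_trig ?diag_mx_is_trig //.
by apply: eq_bigr => i _; rewrite mxE eqxx mulr1n.
Qed.

Definition specs (M : 'M[int]_n) : seq algC := [seq spD M 0 i | i <- index_enum 'I_n].

Lemma prod_specs (M : 'M[int]_n) : M^T = M ->
  map_poly intr (char_poly M) = \prod_(x <- specs M) ('X - x%:P).
Proof. by move=> sM; rewrite char_sp // big_map. Qed.

Lemma mup_prod (a : algC) s : mup a (\prod_(x <- s) ('X - x%:P)) = count_mem a s.
Proof.
elim: s => [|x s IH]; first by rewrite big_nil mupNroot // root1.
rewrite big_cons mupM ?polyXsubC_eq0 ?monic_neq0 ?monic_prod_XsubC //.
by rewrite -[_ - _]expr1 mup_XsubCX IH /=; case: (x == a).
Qed.

Lemma specs_perm (M1 M2 : 'M[int]_n) : M1^T = M1 -> M2^T = M2 ->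
  char_poly M1 = char_poly M2 -> perm_eq (specs M1) (specs M2).
Proof.
move=> s1 s2 E; apply/allP => a _; apply/eqP.
by rewrite -!mup_prod -!prod_specs // E.
Qed.

Lemma rank_conj (P N : 'M[algC]_n) : P \in unitmx ->
  \rank (invmx P *m N *m P) = \rank N.
Proof.
move=> Pu; rewrite mxrankMfree ?row_free_unit //.
apply/eqP; rewrite eqn_leq mxrankM_maxr /=.
have {1}-> : N = P *m (invmx P *m N) by rewrite mulKVmx.
exact: mxrankM_maxr.
Qed.

Lemma shift_sp (M : 'M[int]_n) (c : algC) : M^T = M ->
  toC M + c%:M = invmx (spP M) *m diag_mx (spD M + const_mx c) *m spP M.
Proof.
move=> sM; rewrite {1}spE // raddfD /= diag_const_mx mulmxDr mulmxDl.
by rewrite mul_mx_scalar -scalemxAl mulVmx ?spU // scalemx1.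
Qed.

Lemma card_count (d : 'rV[algC]_n) (p : pred algC) :
  #|[set i | p (d 0 i)]| = count p [seq d 0 i | i <- index_enum 'I_n].
Proof.
rewrite count_map -sum1_count -sum1_card; apply: eq_bigl => i.
by rewrite inE.
Qed.

Lemma rank_sp (M : 'M[int]_n) (c : algC) : M^T = M ->
  \rank (toC M + c%:M)%R = count (fun x => x + c != 0) (specs M).
Proof.
move=> sM; rewrite shift_sp // rank_conj ?spU // rank_diag.
rewrite -(card_count (spD M) (fun x => x + c != 0)).
by apply: eq_card => i; rewrite !inE !mxE.
Qed.

Lemma diag_mul (d e : 'rV[algC]_n) :
  diag_mx d *m diag_mx e = diag_mx (\row_i (d 0 i * e 0 i)).
Proof.
apply/matrixP => i j; rewrite mul_diag_mx !mxE.
by case: (i == j); rewrite ?mulr1n ?mulr0n ?mulr0.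
Qed.

Lemma tr_sp2 (M : 'M[int]_n) (c : algC) : M^T = M ->
  \tr ((toC M + c%:M) *m (toC M + c%:M)) = \sum_(x <- specs M) (x + c) ^+ 2.
Proof.
move=> sM; rewrite shift_sp //; set P := spP M; set D := diag_mx _.
have Pu : P \in unitmx by exact: spU.
have -> : invmx P *m D *m P *m (invmx P *m D *m P) = invmx P *m (D *m D) *m P.
  by rewrite !mulmxA mulmxK // -!mulmxA.
rewrite mxtrace_mulC mulKVmx //  /D diag_mul mxtrace_diag big_map.
by apply: eq_bigr => i _; rewrite !mxE expr2.
Qed.

Lemma tr_sp3 (M : 'M[int]_n) (c : algC) : M^T = M ->
  \tr ((toC M + c%:M) *m (toC M + c%:M) *m (toC M + c%:M)) =
  \sum_(x <- specs M) (x + c) ^+ 3.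
Proof.
move=> sM; rewrite shift_sp //; set P := spP M; set D := diag_mx _.
have Pu : P \in unitmx by exact: spU.
have -> : invmx P *m D *m P *m (invmx P *m D *m P) *m (invmx P *m D *m P)
    = invmx P *m (D *m D *m D) *m P.
  by rewrite !mulmxA !mulmxK // -!mulmxA.
rewrite mxtrace_mulC mulKVmx //  /D !diag_mul mxtrace_diag big_map.
by apply: eq_bigr => i _; rewrite !mxE !exprS expr0 mulr1 mulrA.
Qed.

End LinAlg.

Section Bmat.
Variables (N : nat) (A Bs : {set 'I_N}).
Hypothesis disj : forall i, i \in A -> i \in Bs = false.

Definition crs (i j : 'I_N) := ((i \in A) && (j \in Bs)) || ((i \in Bs) && (j \in A)).

Definition Bmat : 'M[algC]_N := \matrix_(i, j) (1 + (crs i j)%:R).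

Definition Xm : 'M[algC]_(N, 3) := \matrix_(i, c) 
  (if val c == 0%N then 1 else if val c == 1%N then (i \in A)%:R else (i \in Bs)%:R).
Definition Ym : 'M[algC]_(3, N) := \matrix_(c, j) 
  (if val c == 0%N then 1 else if val c == 1%N then (j \in Bs)%:R else (j \in A)%:R).

Lemma notAB i : i \in A -> i \in Bs = false.
Proof. exact: disj. Qed.

Lemma Bmat_fact : Bmat = Xm *m Ym.
Proof.
apply/matrixP => i j; rewrite !mxE !big_ord_recl big_ord0 !mxE /= /crs.
rewrite mul1r addr0.
have [iA|iA] := boolP (i \in A); have [jA|jA] := boolP (j \in A);
  rewrite ?(notAB iA) ?(notAB jA) /= ?mul0r ?mul1r ?addr0 ?add0r //=;
  case: (j \in Bs); case: (i \in Bs); rewrite /= ?mul0r ?mul1r ?addr0 ?add0r //.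
Qed.

Lemma Bmat_rank : (\rank Bmat <= 3)%N.
Proof. rewrite Bmat_fact; exact: leq_trans (mxrankM_maxl _ _) (rank_leq_col _). Qed.

Lemma sum_ind (P : pred 'I_N) : \sum_(i < N) ((P i)%:R : algC) = #|P|%:R.
Proof.
rewrite -natr_sum; congr (_%:R); rewrite -sum1_card [RHS]big_mkcond /=.
by apply: eq_bigr => i _; rewrite unfold_in; case: (P i).
Qed.

Definition zz (r c : 'I_3) : algC :=
  match val r, val c with
  | O, O => N%:R | O, S O => #|A|%:R | O, _ => #|Bs|%:R
  | S O, O => #|Bs|%:R | S O, S O => 0 | S O, _ => #|Bs|%:R
  | _, O => #|A|%:R | _, S O => #|A|%:R | _, _ => 0 end.

Lemma sum_indE (F : 'I_N -> algC) (P : pred 'I_N) :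
  (forall j, F j = (P j)%:R) -> \sum_j F j = #|P|%:R.
Proof. by move=> H; rewrite -sum_ind; apply: eq_bigr => j _; rewrite H. Qed.

Lemma cardAA : #|[pred i | (i \in A) && (i \in A)]| = #|A|.
Proof. by apply: eq_card => i; rewrite !inE andbb. Qed.
Lemma cardBB : #|[pred i | (i \in Bs) && (i \in Bs)]| = #|Bs|.
Proof. by apply: eq_card => i; rewrite !inE andbb. Qed.
Lemma cardBA : #|[pred i | (i \in Bs) && (i \in A)]| = 0%N.
Proof.
apply: eq_card0 => i; rewrite !inE /=.
by case: (boolP (i \in A)) => [/notAB -> //|_]; rewrite andbF.
Qed.
Lemma cardAB : #|[pred i | (i \in A) && (i \in Bs)]| = 0%N.
Proof. by rewrite -cardBA; apply: eq_card => i; rewrite !inE andbC. Qed.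

Lemma YX : Ym *m Xm = \matrix_(r, c) zz r c.
Proof.
apply/matrixP => r c; rewrite !mxE.
case: r => [[|[|[|//]]] ?]; case: c => [[|[|[|//]]] ?]; rewrite /zz /=.
- rewrite (@sum_indE _ predT) ?card_ord // => j; rewrite !mxE /= mulr1 //.
- rewrite (@sum_indE _ (mem A)) // => j; rewrite !mxE /= mul1r //.
- rewrite (@sum_indE _ (mem Bs)) // => j; rewrite !mxE /= mul1r //.
- rewrite (@sum_indE _ (mem Bs)) // => j; rewrite !mxE /= mulr1 //.
- rewrite (@sum_indE _ [pred i | (i \in Bs) && (i \in A)]) ?cardBA // => j.
  by rewrite !mxE /= -natrM mulnb.
- rewrite (@sum_indE _ [pred i | (i \in Bs) && (i \in Bs)]) ?cardBB // => j.
  by rewrite !mxE /= -natrM mulnb.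
- rewrite (@sum_indE _ (mem A)) // => j; rewrite !mxE /= mulr1 //.
- rewrite (@sum_indE _ [pred i | (i \in A) && (i \in A)]) ?cardAA // => j.
  by rewrite !mxE /= -natrM mulnb.
- rewrite (@sum_indE _ [pred i | (i \in A) && (i \in Bs)]) ?cardAB // => j.
  by rewrite !mxE /= -natrM mulnb.
Qed.

Lemma Bmat_tr2 : \tr (Bmat *m Bmat) = N%:R ^+ 2 + 6 * #|A|%:R * #|Bs|%:R.
Proof.
rewrite Bmat_fact -mulmxA mxtrace_mulC !mulmxA.
have -> : Ym *m Xm *m Ym *m Xm = (Ym *m Xm) *m (Ym *m Xm) by rewrite !mulmxA.
rewrite YX.
rewrite /mxtrace; rewrite !(big_ord_recl, big_ord0, mxE) /zz /=.
ring.
Qed.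

Lemma Bmat_tr3 : \tr (Bmat *m Bmat *m Bmat) =
  N%:R ^+ 3 + 6 * N%:R * #|A|%:R * #|Bs|%:R + 3 * #|A|%:R * #|Bs|%:R * (#|A|%:R + #|Bs|%:R).
Proof.
rewrite Bmat_fact.
have -> : Xm *m Ym *m (Xm *m Ym) *m (Xm *m Ym) = Xm *m (Ym *m Xm *m Ym *m Xm *m Ym).
  by rewrite !mulmxA.
rewrite mxtrace_mulC.
have -> : Ym *m Xm *m Ym *m Xm *m Ym *m Xm = (Ym *m Xm) *m (Ym *m Xm) *m (Ym *m Xm).
  by rewrite !mulmxA.
rewrite YX.
rewrite /mxtrace; rewrite !(big_ord_recl, big_ord0, mxE) /zz /=.
ring.
Qed.

End Bmat.

Definition Bc N (e : rel 'I_N) : 'M[algC]_N := toC (distmx e) + 1%:M.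

Lemma BcE N (e : rel 'I_N) i j : Bc e i j = (dist e i j + (i == j))%N%:R.
Proof. by rewrite !mxE -pmulrn natrD. Qed.

Lemma no4 N (e : rel 'I_N) (f : 'I_4 -> 'I_N) (Q C : 'M[int]_4) (c : int) :
  (\rank (Bc e) <= 3)%N -> c != 0 -> C *m Q = c%:M ->
  (forall p q, Posz (dist e (f p) (f q) + (f p == f q)) = Q p q) -> False.
Proof.
move=> r3 c0 CQ HQ.
have E : mxsub f f (Bc e) = map_mx intr Q.
  by apply/matrixP => p q; rewrite [LHS]mxE BcE [RHS]mxE -HQ -pmulrn.
have := leq_trans (rank_mxsub f f (Bc e)) r3; rewrite E.
have : (\rank ((intr c : algC) *: (1%:M : 'M_4)) <= \rank (map_mx (intr : int -> algC) Q))%N.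
  have -> : (intr c : algC) *: (1%:M : 'M_4) = map_mx intr C *m map_mx intr Q.
    by rewrite -map_mxM CQ scalemx1 map_scalar_mx.
  exact: mxrankM_maxr.
rewrite mxrank_scale_nz ?mxrank1 ?intr_eq0 //.
by move=> H1 H2; have := leq_trans H1 H2.
Qed.

Definition T6 (d01 d02 d03 d12 d13 d23 : nat) : 'M[int]_4 :=
  \matrix_(i, j) (if i == j then 1 else
     match minn i j, maxn i j with
     | O, S O => d01 | O, S (S O) => d02 | O, _ => d03
     | S O, S (S O) => d12 | S O, _ => d13 | _, _ => d23 end)%N%:Z.

Definition tbl (l : seq (seq int)) : 'M[int]_4 := \matrix_(i, j) nth 0 (nth [::] l i) j.

Section Bad.
Variables (N : nat) (e : rel 'I_N).
Hypotheses (esym : symmetric e) (econn : forall u v, connect e u v).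
Hypothesis r3 : (\rank (Bc e) <= 3)%N.

Lemma bad6 (a0 a1 a2 a3 : 'I_N) d01 d02 d03 d12 d13 d23 C (c : int) :
  c != 0 -> C *m T6 d01 d02 d03 d12 d13 d23 = c%:M ->
  dist e a0 a1 = d01 -> dist e a0 a2 = d02 -> dist e a0 a3 = d03 ->
  dist e a1 a2 = d12 -> dist e a1 a3 = d13 -> dist e a2 a3 = d23 ->
  (0 < d01)%N -> (0 < d02)%N -> (0 < d03)%N -> (0 < d12)%N -> (0 < d13)%N -> (0 < d23)%N ->
  False.
Proof.
move=> c0 CQ H01 H02 H03 H12 H13 H23 P01 P02 P03 P12 P13 P23.
have ds := dist_sym esym econn.
have H10 := H01; rewrite ds in H10. have H20 := H02; rewrite ds in H20.
have H30 := H03; rewrite ds in H30. have H21 := H12; rewrite ds in H21.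
have H31 := H13; rewrite ds in H31. have H32 := H23; rewrite ds in H32.
have neq u v d : dist e u v = d -> (0 < d)%N -> (u == v) = false.
  by move=> <-; rewrite lt0n dist0 // => /negPf.
have E01 := neq _ _ _ H01 P01. have E02 := neq _ _ _ H02 P02.
have E03 := neq _ _ _ H03 P03. have E12 := neq _ _ _ H12 P12.
have E13 := neq _ _ _ H13 P13. have E23 := neq _ _ _ H23 P23.
have E10 := neq _ _ _ H10 P01. have E20 := neq _ _ _ H20 P02.
have E30 := neq _ _ _ H30 P03. have E21 := neq _ _ _ H21 P12.
have E31 := neq _ _ _ H31 P13. have E32 := neq _ _ _ H32 P23.
apply: (@no4 N e (fun p => nth a0 [:: a0; a1; a2; a3] p) _ C c r3 c0 CQ).
move=> p q; rewrite mxE.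
case: p => [[|[|[|[|//]]]] ?]; case: q => [[|[|[|[|//]]]] ?] /=;
  rewrite ?H01 ?H02 ?H03 ?H12 ?H13 ?H23 ?H10 ?H20 ?H30 ?H21 ?H31 ?H32;
  rewrite ?E01 ?E02 ?E03 ?E12 ?E13 ?E23 ?E10 ?E20 ?E30 ?E21 ?E31 ?E32;
  by rewrite ?dist_refl ?eqxx ?addn0.
Qed.
End Bad.

Ltac mxcheck := apply/matrixP; case=> [[|[|[|[|?]]]] ?] //; case=> [[|[|[|[|?]]]] ?] //;
  rewrite !mxE !big_ord_recl big_ord0 !mxE //=.

Lemma geo_ok : tbl [:: [:: -1; 1; 2; -1]; [:: 1; -1; -3; 2]; [:: 2; -3; -1; 1]; [:: -1; 2; 1; -1]]
  *m T6 1 2 3 1 2 1 = 1%:M.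
Proof. mxcheck. Qed.
Lemma k3k1_ok : tbl [:: [:: -1; 1; 1; -1]; [:: 1; -1; 1; -1]; [:: 1; 1; -1; -1]; [:: -1; -1; -1; 5]]
  *m T6 2 2 1 2 1 1 = 2%:M.
Proof. mxcheck. Qed.
Lemma paw_ok : tbl [:: [:: 0; 3; 0; -3]; [:: 3; 0; 0; -3]; [:: 0; 0; -1; 2]; [:: -3; -3; 2; 5]]
  *m T6 2 2 1 2 1 2 = 3%:M.
Proof. mxcheck. Qed.
Lemma p4_ok : tbl [:: [:: 0; 3; 0; -3]; [:: 3; -1; -1; 0]; [:: 0; -1; -1; 3]; [:: -3; 0; 3; 0]]
  *m T6 2 1 1 2 1 2 = 3%:M.
Proof. mxcheck. Qed.
Lemma k2k2_ok : tbl [:: [:: -1; 4; -1; -1]; [:: 4; -1; -1; -1]; [:: -1; -1; -1; 4]; [:: -1; -1; 4; -1]]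
  *m T6 2 1 1 1 1 2 = 5%:M.
Proof. mxcheck. Qed.

Section Structure.
Variables (N : nat) (e : rel 'I_N).
Hypotheses (esym : symmetric e) (eirr : irreflexive e)
  (econn : forall u v, connect e u v).
Hypothesis r3 : (\rank (Bc e) <= 3)%N.

Let ds := dist_sym esym econn.
Let bad := bad6 esym econn r3.

Lemma down u v m : (3 <= m)%N -> dist e u v = m -> exists w, dist e u w = 3%N.
Proof.
elim: m v => [//|m IH] v; rewrite leq_eqVlt => /orP[/eqP <- d3|lt dm].
  by exists v.
have [y [dy _]] := dist_pred econn dm.
exact: IH dy.
Qed.

Lemma neq_dist u v d : dist e u v = d.+1 -> (u == v) = false.
Proof. by move=> H; apply/negbTE; rewrite -(dist0 econn) H. Qed.

Lemma diam2 u v : (dist e u v <= 2)%N.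
Proof.
rewrite leqNgt; apply/negP => lt.
have [w dw] := down lt (erefl _).
have [y [dy eyw]] := dist_pred econn dw.
have [x [dx exy]] := dist_pred econn dy.
have nxy : x != y by apply/negP => /eqP exy'; move: dx; rewrite exy' dy.
have nyw : y != w by apply/negP => /eqP eyw'; move: dy; rewrite eyw' dw.
have dxy : dist e x y = 1%N by apply/eqP; rewrite (dist1 econn).
have dyw : dist e y w = 1%N by apply/eqP; rewrite (dist1 econn).
have dxw : dist e x w = 2%N.
  apply/eqP; rewrite eqn_leq; apply/andP; split.
    by have := dist_edge econn x eyw; rewrite dxy.
  by have := dist_tri econn u x w; rewrite dx dw.
by apply: (bad _ geo_ok dx dy dw dxy dxw dyw).
Qed.

Definition F u v := dist e u v == 2%N.

Lemma Fsym u v : F u v = F v u.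
Proof. by rewrite /F ds. Qed.

Lemma Fneq u v : F u v -> (u == v) = false.
Proof. by move=> /eqP; apply: neq_dist. Qed.

Lemma distF u v : u != v -> dist e u v = if F u v then 2%N else 1%N.
Proof.
move=> nuv; rewrite /F; have := diam2 u v.
have : dist e u v != 0%N by rewrite (dist0 econn).
by case: (dist e u v) => [|[|[|]]].
Qed.

Lemma dF u v : F u v -> dist e u v = 2%N.
Proof. by move/eqP. Qed.

Lemma dnF u v : u != v -> ~~ F u v -> dist e u v = 1%N.
Proof. by move=> nuv /negPf nF; rewrite distF // nF. Qed.

Lemma eF u v : e u v = (u != v) && ~~ F u v.
Proof.
have [->|nuv] := eqVneq u v; first by rewrite eirr.
by rewrite -(dist1 econn) // distF //; case: (F u v).
Qed.

Lemma L3 x y z : F x y -> F y z -> F x z -> False.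
Proof.
move=> Fxy Fyz Fxz.
have [w [dxw ewy]] := dist_pred econn (dF Fxy).
have nwy : w != y by apply/negP => /eqP E; move: dxw; rewrite E (dF Fxy).
have nwz : w != z by apply/negP => /eqP E; move: dxw; rewrite E (dF Fxz).
have dwy : dist e y w = 1%N by rewrite ds; apply/eqP; rewrite (dist1 econn).
have nzw : z != w by rewrite eq_sym.
have [Fzw|nFzw] := boolP (F z w).
  by apply: (bad _ paw_ok (dF Fxy) (dF Fxz) dxw (dF Fyz) dwy (dF Fzw)).
by apply: (bad _ k3k1_ok (dF Fxy) (dF Fxz) dxw (dF Fyz) dwy (dnF nzw nFzw)).
Qed.

Lemma L1 x y u v : F x y -> F y u -> F u v -> F x v.
Proof.
move=> Fxy Fyu Fuv; apply/negPn/negP => nFxv.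
have nFxu : ~~ F x u by apply/negP => Fxu; exact: L3 Fxy Fyu Fxu.
have nFyv : ~~ F y v by apply/negP => Fyv; exact: L3 Fyu Fuv Fyv.
have nxu : x != u by apply/negP => /eqP E; move: nFxv; rewrite E Fuv.
have nyv : y != v by apply/negP => /eqP E; move: nFxv; rewrite -E Fxy.
have nxv : x != v by apply/negP => /eqP E; move: nFxu; rewrite E Fsym Fuv.
by apply: (bad _ p4_ok (dF Fxy) (dnF nxu nFxu) (dnF nxv nFxv) (dF Fyu)
  (dnF nyv nFyv) (dF Fuv)).
Qed.

Lemma L4 x y a b : F x y -> F y a -> F x b -> F a b.
Proof.
move=> Fxy Fya Fxb; apply/negPn/negP => nFab.
have nax : a != x by apply/negP => /eqP E; move: nFab; rewrite E Fxb.
have nby : b != y by apply/negP => /eqP E; move: nFab; rewrite E Fsym Fya.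
have nFxa : ~~ F x a by apply/negP => Fxa; exact: L3 Fxy Fya Fxa.
have nFyb : ~~ F y b by apply/negP => Fyb; rewrite Fsym in Fxy; exact: L3 Fxy Fxb Fyb.
have nab : a != b by apply/negP => /eqP E; move: nFxa; rewrite E Fxb.
have Fay : F a y by rewrite Fsym.
have Fyx : F y x by rewrite Fsym.
have nFax : ~~ F a x by rewrite Fsym.
have nyb : y != b by rewrite eq_sym.
by apply: (bad _ p4_ok (dF Fay) (dnF nax nFax) (dnF nab nFab) (dF Fyx)
  (dnF nyb nFyb) (dF Fxb)).
Qed.

Lemma L2 x y u v : F x y -> F u v -> ~~ F x u -> ~~ F y u -> ~~ F x v -> ~~ F y v -> False.
Proof.
move=> Fxy Fuv nFxu nFyu nFxv nFyv.
have nxu : x != u by apply/negP => /eqP E; move: nFxv; rewrite E Fuv.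
have nxv : x != v by apply/negP => /eqP E; move: nFxu; rewrite E Fsym Fuv.
have nyu : y != u by apply/negP => /eqP E; move: nFyv; rewrite E Fuv.
have nyv : y != v by apply/negP => /eqP E; move: nFyu; rewrite E Fsym Fuv.
by apply: (bad _ k2k2_ok (dF Fxy) (dnF nxu nFxu) (dnF nxv nFxv) (dnF nyu nFyu)
  (dnF nyv nFyv) (dF Fuv)).
Qed.

Lemma structure : exists A Bs : {set 'I_N},
  (forall i, i \in A -> i \in Bs = false) /\ (forall u v, F u v = crs A Bs u v).
Proof.
have [/existsP[x /existsP[y Fxy]]|noF] := boolP [exists x, exists y, F x y]; last first.
  exists set0, set0; split => [i|u v]; rewrite ?inE //.
  rewrite /crs !inE /=; apply/negP => Fuv; move/negP: noF; apply.
  by apply/existsP; exists u; apply/existsP; exists v.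
exists [set v | F y v], [set v | F x v]; split => [i|u v].
  rewrite !inE => Fyi; apply/negP => Fxi; exact: L3 Fxy Fyi Fxi.
rewrite /crs !inE; apply/idP/idP => [Fuv|].
  have [Fyu|nFyu] := boolP (F y u).
    by rewrite (L1 Fxy Fyu Fuv).
  have [Fxu|nFxu] := boolP (F x u).
    have Fyx : F y x by rewrite Fsym.
    by rewrite (L1 Fyx Fxu Fuv) orbT.
  have Fvu : F v u by rewrite Fsym.
  have [Fyv|nFyv] := boolP (F y v).
    by move: nFxu; rewrite (L1 Fxy Fyv Fvu).
  have [Fxv|nFxv] := boolP (F x v).
    have Fyx : F y x by rewrite Fsym.
    by move: nFyu; rewrite (L1 Fyx Fxv Fvu).
  by case: (L2 Fxy Fuv nFxu nFyu nFxv nFyv).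
case/orP => /andP[H1 H2]; first exact: L4 Fxy H1 H2.
rewrite Fsym; exact: L4 Fxy H2 H1.
Qed.

End Structure.

Lemma cospec N (M1 M2 : 'M[int]_N) : M1^T = M1 -> M2^T = M2 ->
  char_poly M1 = char_poly M2 ->
  [/\ \rank (toC M1 + 1%:M)%R = \rank (toC M2 + 1%:M)%R,
      \tr ((toC M1 + 1%:M) *m (toC M1 + 1%:M)) = \tr ((toC M2 + 1%:M) *m (toC M2 + 1%:M)) &
      \tr ((toC M1 + 1%:M) *m (toC M1 + 1%:M) *m (toC M1 + 1%:M)) =
      \tr ((toC M2 + 1%:M) *m (toC M2 + 1%:M) *m (toC M2 + 1%:M))].
Proof.
move=> s1 s2 E; have P := specs_perm s1 s2 E.
split.
- by rewrite !rank_sp //; move/seq.permP: P; apply.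
- by rewrite !tr_sp2 //; apply: perm_big.
- by rewrite !tr_sp3 //; apply: perm_big.
Qed.

Lemma distmx_sym N (e : rel 'I_N) : symmetric e -> (forall u v, connect e u v) ->
  (distmx e)^T = distmx e.
Proof. by move=> es ec; apply/matrixP => i j; rewrite !mxE (dist_sym es ec). Qed.

Lemma Bc_struct N (e : rel 'I_N) (A Bs : {set 'I_N}) :
  (forall u v, connect e u v) ->
  (forall i, i \in A -> i \in Bs = false) ->
  (forall u v, e u v = (u != v) && ~~ crs A Bs u v) ->
  (forall u v, dist e u v <= 2)%N ->
  Bc e = Bmat A Bs.
Proof.
move=> ec disj eE d2; apply/matrixP => u v; rewrite BcE mxE.
have [<-|nuv] := eqVneq u v.
  rewrite (dist_refl ec) /crs.
  case: (boolP (u \in A)) => [uA|/negPf nuA]; first by rewrite disj //= addr0.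
  by rewrite ?andbF /= ?addr0.
have := d2 u v; have := (dist1 ec nuv); rewrite eE nuv /=.
have : dist e u v != 0%N by rewrite (dist0 ec).
case: (dist e u v) => [|[|[|]]] //= _; case: (crs A Bs u v) => //= _ _.
by rewrite addn0 addr0.
Qed.

Section PermLab.
Variables (N : nat) (A B A' B' : {set 'I_N}).
Hypotheses (dAB : forall i, i \in A -> i \in B = false)
  (dAB' : forall i, i \in A' -> i \in B' = false)
  (cA : #|A| = #|A'|) (cB : #|B| = #|B'|).

Definition lab (X Y : {set 'I_N}) (x : 'I_N) : nat :=
  if x \in X then 0%N else if x \in Y then 1%N else 2%N.

Lemma count_lab (X Y : {set 'I_N}) c :
  count (pred1 c) (map (lab X Y) (index_enum 'I_N)) = #|[set x | lab X Y x == c]|.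
Proof.
rewrite count_map -sum1_count -sum1_card; apply: eq_bigl => i.
by rewrite !inE.
Qed.

Lemma card_lab (X Y : {set 'I_N}) c : (forall i, i \in X -> i \in Y = false) ->
  #|[set x | lab X Y x == c]| =
  if c == 0%N then #|X| else if c == 1%N then #|Y| else
  if c == 2%N then (N - (#|X| + #|Y|))%N else 0%N.
Proof.
move=> d; rewrite /lab.
case: c => [|[|[|c]]] /=.
- by apply: eq_card => x; rewrite !inE; case: (x \in X); case: (x \in Y).
- apply: eq_card => x; rewrite !inE; case: (boolP (x \in X)) => [xX|_].
    by rewrite d.
  by case: (x \in Y).
- transitivity #|~: (X :|: Y)|.
    by apply: eq_card => x; rewrite !inE; case: (x \in X); case: (x \in Y).
  rewrite cardsCs setCK card_ord cardsU.
  have -> : #|X :&: Y| = 0%N.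
    apply/eqP; rewrite cards_eq0; apply/eqP/setP => x; rewrite !inE.
    by case: (boolP (x \in X)) => // /d ->.
  by rewrite subn0.
- apply: eq_card0 => x; rewrite !inE.
  by case: (x \in X); case: (x \in Y).
Qed.

Lemma perm_lab : exists f : {perm 'I_N}, forall x,
  (x \in A) = (f x \in A') /\ (x \in B) = (f x \in B').
Proof.
set s := [seq lab A B i | i <- enum 'I_N].
set t := [tuple lab A' B' i | i < N].
have idx : perm_eq (index_enum 'I_N) (enum 'I_N).
  apply: uniq_perm; rewrite ?index_enum_uniq ?enum_uniq // => x.
  by rewrite mem_index_enum mem_enum.
have P : perm_eq s t.
  rewrite /s /=.
  apply: (@perm_trans _ [seq lab A B i | i <- index_enum 'I_N]).
    by rewrite perm_sym; apply: perm_map.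
  apply: (@perm_trans _ [seq lab A' B' i | i <- index_enum 'I_N]); last exact: perm_map.
  apply/allP => c _; apply/eqP.
  by rewrite !count_lab !card_lab // cA cB.
have [p Ep] := tuple_permP P.
exists p => x.
have : lab A B x = lab A' B' (p x).
  have := congr1 (fun l => nth 0%N l x) Ep.
  have nx : nth x (enum 'I_N) x = x by apply: val_inj; rewrite /= nth_enum_ord.
  rewrite /s (nth_map x) ?size_enum_ord // nx.
  by move=> ->; rewrite -tnth_nth tnth_mktuple /t tnth_mktuple.
rewrite /lab.
case: (boolP (x \in A)) => [xA|nxA]; case: (boolP (p x \in A')) => [pA|npA] //.
  by rewrite (dAB xA) (dAB' pA).
- by case: (p x \in B').
- by case: (x \in B).
- by case: (x \in B); case: (p x \in B').
Qed.
End PermLab.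

Section KstFacts.
Variables (s t : nat).
Hypotheses (hs : (2 <= s)%N) (ht : (2 <= t)%N).

Definition A0 : {set 'I_(s + t - 1)} := [set i : 'I_(s + t - 1) | (0 < i < s)%N].
Definition B0 : {set 'I_(s + t - 1)} := [set i : 'I_(s + t - 1) | (s <= i)%N].

Lemma K_disj i : i \in A0 -> i \in B0 = false.
Proof. by rewrite !inE => /andP[_ lt]; rewrite leqNgt lt. Qed.

Lemma K_disj' i : i \in B0 -> i \in A0 = false.
Proof. by rewrite !inE => le; apply/negbTE/negP => /andP[_ lt]; move: le; rewrite leqNgt lt. Qed.

Lemma K_E u v : Kst s t u v = (u != v) && ~~ crs A0 B0 u v.
Proof.
rewrite /Kst /crs !inE; congr (_ && _).
case: u v => [u Hu] [v Hv] /=.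
case: (ltnP u s) => us; case: (ltnP v s) => vs /=; rewrite ?andbT ?andbF /=;
  case: u Hu us => [|u] Hu us; case: v Hv vs => [|v] Hv vs //=.
Qed.

Lemma K_sym : symmetric (Kst s t).
Proof. move=> u v; rewrite !K_E [u == v]eq_sym /crs; by case: (u \in A0); case: (u \in B0); case: (v \in A0); case: (v \in B0). Qed.

Lemma K_irr : irreflexive (Kst s t).
Proof. by move=> u; rewrite K_E eqxx. Qed.

Lemma N_gt0 : (0 < s + t - 1)%N.
Proof. lia. Qed.

Definition o0 : 'I_(s + t - 1) := Ordinal N_gt0.

Lemma K_0 v : v != o0 -> Kst s t o0 v.
Proof.
move=> nv; rewrite K_E eq_sym nv /crs !inE /=.
have s0 : (s <= 0)%N = false by case: (s) hs.
by rewrite s0. Qed.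

Lemma K_conn u v : connect (Kst s t) u v.
Proof.
have c0 w : connect (Kst s t) o0 w.
  have [->|nw] := eqVneq w o0; first exact: connect0.
  by apply: connect1; apply: K_0.
apply: connect_trans (c0 v).
have [->|nu] := eqVneq u o0; first exact: connect0.
by apply: connect1; rewrite K_sym; apply: K_0.
Qed.

Lemma K_d2 u v : (dist (Kst s t) u v <= 2)%N.
Proof.
have d1 w : (dist (Kst s t) o0 w <= 1)%N.
  rewrite (dist_le K_conn); have [->|nw] := eqVneq w o0.
    by apply: (subsetP (ballS _ _ _)); rewrite ball0.
  by apply: ball1; apply: K_0.
apply: leq_trans (dist_tri K_conn u o0 v) _.
rewrite (dist_sym K_sym K_conn u o0); exact: leq_add (d1 u) (d1 v).
Qed.

Lemma A0_gt0 : (0 < #|A0|)%N.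
Proof.
have lt : (1 < s + t - 1)%N by lia.
by apply/card_gt0P; exists (Ordinal lt); rewrite inE /=.
Qed.

Lemma B0_gt0 : (0 < #|B0|)%N.
Proof.
have lt : (s < s + t - 1)%N by lia.
by apply/card_gt0P; exists (Ordinal lt); rewrite inE /=.
Qed.

End KstFacts.

Local Close Scope ring_scope.

Theorem theorem3p5 (s t : nat) (hs : (2 <= s)%N) (ht : (2 <= t)%N)
  (e : rel 'I_(s + t - 1)) :
  simple_graph e -> connected_graph e ->
  D_cospectral e (Kst s t) -> graph_iso e (Kst s t).
Proof.
move=> [esym eirr] econn cosp.
have sG := distmx_sym esym econn.
have kc := @K_conn s t hs ht.
have kd := @K_d2 s t hs ht.
have sK := distmx_sym (@K_sym s t) kc.
have [rk t2 t3] := cospec sG sK cosp.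
have BK : Bc (Kst s t) = Bmat (A0 s t) (B0 s t).
  exact: Bc_struct kc (@K_disj s t) (@K_E s t) kd.
have r3 : (\rank (Bc e) <= 3)%N.
  by rewrite /Bc rk -/(Bc (Kst s t)) BK; apply: Bmat_rank; apply: K_disj.
have [A [Bs [disj FE]]] := structure esym econn r3.
have eE u v : e u v = (u != v) && ~~ crs A Bs u v by rewrite (eF esym eirr econn r3) FE.
have BG : Bc e = Bmat A Bs.
  exact: Bc_struct econn disj eE (diam2 esym econn r3).
rewrite -/(Bc e) -/(Bc (Kst s t)) BG BK !Bmat_tr2 // in t2; last exact: K_disj.
rewrite -/(Bc e) -/(Bc (Kst s t)) BG BK !Bmat_tr3 // in t3; last exact: K_disj.
move: t2 t3; rewrite -!natrX -!natrM -!natrD -!natrM -!natrD => /eqP; rewrite eqr_nat => /eqP t2 /eqP; rewrite eqr_nat => /eqP t3.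
have a0p := @A0_gt0 s t hs ht; have b0p := @B0_gt0 s t hs ht.
have [[ea eb]|[ea eb]] : (#|A| = #|A0 s t| /\ #|Bs| = #|B0 s t|) \/ (#|A| = #|B0 s t| /\ #|Bs| = #|A0 s t|).
  move: t2 t3 a0p b0p; set a := #|A|; set b := #|Bs|; set a0 := #|A0 s t|; set b0 := #|B0 s t|.
  move=> t2 t3 a0p b0p.
  have h1 : a * b = a0 * b0 by nia.
  have h2 : a + b = a0 + b0 by nia.
  nia.
- have [f Hf] := perm_lab disj (@K_disj s t) ea eb.
  exists f => x y; rewrite eE K_E (inj_eq perm_inj) /crs.
  by have [-> ->] := Hf x; have [-> ->] := Hf y.
- have [f Hf] := perm_lab disj (@K_disj' s t) ea eb.
  exists f => x y; rewrite eE K_E (inj_eq perm_inj) /crs.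
  have [-> ->] := Hf x; have [-> ->] := Hf y.
  by rewrite orbC.
Qed.
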